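(* In the security 1st model, for every attacker AS $m$, destination AS $d$, and AS $s$ that, in normal conditions, has a secure route to $d$ that does not go through $m$, $s$ will use a secure route to $d$ even during $m$'s attack.
   Context: The AS-level topology is an undirected graph $G=(V,E)$ whose edges are annotated as customer-to-provider or peer-to-peer. For each destination AS $d$, every other AS selects one route among those announced to it by neighbors. An insecure AS ranks routes by: (LP, local preference) customer routes over peer routes over provider routes; (SP) shorter AS paths over longer ones; (TB) intradomain tiebreak. Export policy (Ex): a route via a customer is exported to all neighbors, otherwise only to customers. A set $S$ of ASes is secure (has deployed S*BGP); a route is secure if every AS on it is secure (it is learned via S*BGP), otherwise it is insecure. Each secure AS adds a step (SecP): prefer a secure route over an insecure route. In the security 1st model, SecP is placed before the LP step (all ASes use this same ordering). Attack: a single attacker AS $m$ (not actually adjacent to $d$) announces the bogus AS path ''$m,d$'' via legacy (insecure) BGP to all its neighbors; all ASes other than $m$ follow the policies above. ''Normal conditions'' means there is no attack. A protocol downgrade attack is when a source AS that uses a secure route to the legitimate destination under normal conditions switches to an insecure bogus route during the attack. *)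

(* Defs.v *)
From mathcomp Require Import all_boot.
Set Implicit Arguments. Unset Strict Implicit. Unset Printing Implicit Defensive.

(* AS-level topology: an undirected graph whose edges are annotated either
   customer-to-provider or peer-to-peer.
   [cust x y] : x is a customer of y (y is a provider of x).
   [peer x y] : x and y are peers. *)
Record topology (V : finType) := Topology {
  cust : rel V;
  peer : rel V;
  peer_sym : symmetric peer;
  peer_irr : irreflexive peer;
  cust_irr : irreflexive cust;
  cust_asym : forall x y, cust x y -> ~~ cust y x;
  cust_peer : forall x y, cust x y -> ~~ peer x y
}.

Section Routing.
Variables (V : finType) (G : topology V).

Definition adjacent (x y : V) : bool :=
  [|| cust G x y, cust G y x | peer G x y].

(* Standing Gao-Rexford assumption of the model: no customer-provider cycles. *)
Definition no_cp_cycle : Prop :=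
  forall x y, cust G x y -> ~~ connect (cust G) y x.

(* A route held by AS x is its AS path, listed from x to the destination:
   [:: x; next_hop; ...; d].  The destination's own route is [:: d]. *)
Definition next_hop (r : seq V) : option V :=
  if r is _ :: y :: _ then Some y else None.

(* Local-preference class of route r held by x:
   2 = customer route, 1 = peer route, 0 = provider route. *)
Definition lp_class (x : V) (r : seq V) : nat :=
  if r is _ :: y :: _ then
    (if cust G y x then 2 else if peer G x y then 1 else 0)
  else 0.

(* Scenario: [None] = normal conditions; [Some m] = attack by m.
   During m's attack, m announces only the bogus path "m,d" via legacy BGP,
   so every route containing m is (derived from) the bogus, insecure
   announcement. A route is secure iff every AS on it is in S (and, during
   the attack, it is not the bogus legacy route, i.e. does not contain m). *)
Definition is_secure (S : {set V}) (att : option V) (r : seq V) : bool :=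
  all (fun v => v \in S) r &&
  (if att is Some m then m \notin r else true).

Variables (S : {set V}) (tb : V -> V -> nat) (d : V).

Definition announce (att : option V) (sel : V -> option (seq V)) (y : V)
  : option (seq V) :=
  if att == Some y then Some [:: y; d] else sel y.

Definition exports (att : option V) (y x : V) (r : seq V) : bool :=
  [|| y == d, att == Some y, lp_class y r == 2 | cust G x y].

Definition candidate (att : option V) (sel : V -> option (seq V)) (x : V)
  (c : seq V) : Prop :=
  exists y r, [/\ adjacent x y, announce att sel y = Some r,
                  exports att y x r, x \notin r & c = x :: r].

(* [prefers att x c1 c2] : x strictly prefers route c1 to route c2 in the
   security 1st model: SecP (only for secure x), then LP, then SP, then the
   intradomain tiebreak TB on next hops (lower tb value preferred). *)
Definition prefers (att : option V) (x : V) (c1 c2 : seq V) : bool :=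
  let s1 := (x \in S) && is_secure S att c1 in
  let s2 := (x \in S) && is_secure S att c2 in
  let l1 := lp_class x c1 in
  let l2 := lp_class x c2 in
  let tbl := match next_hop c1, next_hop c2 with
             | Some y1, Some y2 => tb x y1 < tb x y2
             | _, _ => false end in
  (s1 && ~~ s2) ||
  ((s1 == s2) &&
   ((l2 < l1) ||
    ((l1 == l2) &&
     ((size c1 < size c2) || ((size c1 == size c2) && tbl))))).

Definition stable (att : option V) (sel : V -> option (seq V)) : Prop :=
  sel d = Some [:: d] /\
  forall x, x != d -> att != Some x ->
    (sel x = None -> forall c, ~ candidate att sel x c) /\
    (forall c, sel x = Some c ->
       candidate att sel x c /\
       forall c', candidate att sel x c' -> ~~ prefers att x c' c).

End Routing.

(* Main.v *)
Require Import Defs.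
From mathcomp Require Import all_boot.

Lemma head_ann (V : finType) (G : topology V) S tb d att (A : V -> option (seq V))
  (HA : stable G S tb d att A) y r :
  announce d att A y = Some r -> exists t, r = y :: t.
Proof.
rewrite /announce; case: eqP => [_ [<-]|/eqP ne]; first by eexists.
move=> Ay; have [Hd Hx] := HA.
case: (eqVneq y d) => [eyd|nyd].
  by move: Ay; rewrite eyd Hd => -[<-]; eexists.
have [_ H2] := Hx y nyd ne.
have [[z [r' [_ _ _ _ ->]]] _] := H2 r Ay; by eexists.
Qed.

Lemma lp_le2 (V : finType) (G : topology V) x c : lp_class G x c <= 2.
Proof. rewrite /lp_class; case: c => [|a [|b t]] //; by case: ifP => // _; case: ifP. Qed.

Lemma suffixA (V : finType) (G : topology V) S tb d m (A : V -> option (seq V))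
  (HA : stable G S tb d (Some m) A) (m_neq_d : m != d) n :
  forall x c, size c <= n -> x != m -> A x = Some c -> m \notin c ->
  forall u, u \in c -> exists p cu, [/\ c = p ++ cu, A u = Some cu &
     (lp_class G x c = 2 -> u != d -> lp_class G u cu = 2)].
Proof.
have [Hd Hx] := HA.
elim: n => [|n IH] x c.
  by case: c.
move=> Hsz xm Ax mc u uc.
case: (eqVneq x d) => [exd|nxd].
  move: Ax; rewrite exd Hd => -[ec]; subst c.
  move: uc; rewrite inE => /eqP ->; exists [::], [:: d]; split => //.
have nmx : Some m != Some x by rewrite (inj_eq (@Some_inj _)) eq_sym.
have [_ H2] := Hx x nxd nmx.
have [[y [r' [adj ann ex xr' ec]]] _] := H2 c Ax; subst c.
have ym : y != m.
  apply/eqP => eym; move: ann; rewrite /announce eym eqxx => -[er'].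
  by move: mc; rewrite -er' !inE eqxx !orbT.
have nmy : Some m != Some y by rewrite (inj_eq (@Some_inj _)) eq_sym.
have [t er'] := @head_ann _ _ _ _ _ _ _ HA _ _ ann.
move: ann; rewrite /announce (negbTE nmy) => Ay.
move: uc; rewrite inE => /orP [/eqP eux|ur'].
  subst u; exists [::], (x :: r'); split => //.
have mr' : m \notin r' by move: mc; rewrite inE negb_or => /andP [].
have [p [cu [e1 e2 e3]]] := IH y r' Hsz ym Ay mr' u ur'.
exists (x :: p), cu; split => //; first by rewrite e1.
rewrite er' /= => lp2 ud.
have cyx : cust G y x by move: lp2; case: ifP => // _; case: ifP.
move: ex; rewrite /exports => /or4P [/eqP eyd| | lpy |cxy].
- move: Ay; rewrite eyd Hd => -[e]; subst r'.
  move: ur'; rewrite -e inE => /eqP eu; by rewrite eu eqxx in ud.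
- by rewrite (inj_eq (@Some_inj _)) eq_sym (negbTE ym).
- exact: e3 (eqP lpy) ud.
- by rewrite (negbTE (cust_asym cxy)) in cyx.
Qed.

Lemma main_claim (V : finType) (G : topology V) (S : {set V})
  (tb : V -> V -> nat) (m d : V) (m_neq_d : m != d)
  (N : V -> option (seq V)) (HN : stable G S tb d None N)
  (A : V -> option (seq V)) (HA : stable G S tb d (Some m) A) n :
  forall v rv, size rv <= n -> N v = Some rv -> is_secure S None rv ->
  m \notin rv ->
  exists c, [/\ A v = Some c, is_secure S (Some m) c &
            lp_class G v rv <= lp_class G v c].
Proof.
have [HNd HNx] := HN; have [HAd HAx] := HA.
elim: n => [|n IH] v rv.
  case: rv => // _ Nv; have [t] := @head_ann _ _ _ _ _ _ _ HN v [::] Nv; done.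
move=> Hsz Nv sec mrv.
case: (eqVneq v d) => [evd|nvd].
  subst v; move: Nv; rewrite HNd => -[erv]; subst rv.
  exists [:: d]; split => //.
  move: sec; rewrite /is_secure /= !inE !andbT => ->; by rewrite m_neq_d.
have [_ H2] := HNx v nvd isT.
have [[y [r1 [adj ann ex vr1 erv]]] _] := H2 rv Nv; subst rv.
move: ann; rewrite /announce /= => Ny.
have [t er1] := @head_ann _ _ _ _ _ _ _ HN _ _ Ny.
move: sec; rewrite /is_secure /= andbT => /andP [vS allr1].
have vm : v != m by apply: contraNneq mrv => ->; rewrite inE eqxx.
have mr1 : m \notin r1 by move: mrv; rewrite inE negb_or => /andP [].
have ym : y != m by apply: contraNneq mr1 => <-; rewrite er1 inE eqxx.
have secr1 : is_secure S None r1 by rewrite /is_secure allr1.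
have [c [Ay secc lpc]] := IH y r1 Hsz Ny secr1 mr1.
have nmy : Some m != Some y by rewrite (inj_eq (@Some_inj _)) eq_sym.
have annc : announce d (Some m) A y = Some c by rewrite /announce (negbTE nmy).
have [t' ec] := @head_ann _ _ _ _ _ _ _ HA y c annc.
have mc : m \notin c by move: secc; rewrite /is_secure => /andP [].
case: (boolP (v \in c)) => vc.
  have [p [cu [e1 e2 e3]]] := @suffixA _ _ _ _ _ _ _ HA m_neq_d _ y c (leqnn (size c)) ym Ay mc v vc.
  exists cu; split => //.
    move: secc; rewrite /is_secure e1 all_cat mem_cat negb_or.
    by case/andP => /andP [_ ->] /andP [_ ->].
  rewrite er1 /=.
  case: ifP => cyv.
    move: ex; rewrite /exports => /or4P [/eqP eyd|//|lpy|cvy].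
    - by move: Ay; rewrite eyd HAd => -[ec']; move: vc; rewrite -ec' inE (negbTE nvd).
    - have lp2 : lp_class G y c = 2.
        by apply/eqP; rewrite eqn_leq lp_le2 -(eqP lpy) lpc.
      by rewrite (e3 lp2 nvd).
    - by rewrite (negbTE (cust_asym cvy)) in cyv.
  case: ifP => pvy //.
  move: ex; rewrite /exports => /or4P [/eqP eyd|//|lpy|cvy].
  - by move: Ay; rewrite eyd HAd => -[ec']; move: vc; rewrite -ec' inE (negbTE nvd).
  - have lp2 : lp_class G y c = 2.
      by apply/eqP; rewrite eqn_leq lp_le2 -(eqP lpy) lpc.
    by rewrite (e3 lp2 nvd).
  - by rewrite (negbTE (cust_peer cvy)) in pvy.
have nmv : Some m != Some v by rewrite (inj_eq (@Some_inj _)) eq_sym.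
have [H3 H4] := HAx v nvd nmv.
have cand : candidate G d (Some m) A v (v :: c).
  exists y, c; split => //.
  move: ex; rewrite /exports => /or4P [->|//|lpy|->]; rewrite ?orbT //.
  have lp2 : lp_class G y c = 2.
    by apply/eqP; rewrite eqn_leq lp_le2 -(eqP lpy) lpc.
  by rewrite lp2 eqxx !orbT.
case Av: (A v) => [c'|]; last by case: (H3 Av _ cand).
have [_ H5] := H4 c' Av.
have np := H5 _ cand.
have secvc : is_secure S (Some m) (v :: c).
  move: secc; rewrite /is_secure /= inE negb_or => /andP [-> ->].
  by rewrite vS eq_sym vm.
move: np; rewrite /prefers secvc vS /=.
case sc': (is_secure S (Some m) c') => //= np.
exists c'; split => //.
move: np; rewrite ec er1 /= negb_or => /andP [+ _]; by rewrite -leqNgt.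
Qed.

Theorem theorem2 (V : finType) (G : topology V) (S : {set V})
  (tb : V -> V -> nat) (tb_inj : forall x, injective (tb x))
  (acyc : no_cp_cycle G)
  (m d s : V) (m_neq_d : m != d) (m_not_adj_d : ~~ adjacent G m d)
  (N : V -> option (seq V)) (r : seq V)
  (HN : stable G S tb d None N)
  (Hs : N s = Some r) (Hsec : is_secure S None r) (Hm : m \notin r)
  (A : V -> option (seq V))
  (HA : stable G S tb d (Some m) A) :
  exists r', A s = Some r' /\ is_secure S (Some m) r'.
Proof.
have [c [Ac secc _]] := @main_claim V G S tb m d m_neq_d N HN A HA (size r) s r (leqnn _) Hs Hsec Hm.
by exists c.
Qed.
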